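(* Let $F$ be a scalar group, $I$ an index set, and $\{V_i\}_{i\in I}$ a family of near-vector spaces over $F$. Let $\bigoplus_{i\in I}V_i=\{(v_i)_{i\in I}\in\prod_{i\in I}V_i : v_i=0\text{ for all but finitely many } i\}$, with componentwise addition and scalar multiplication, and for each $i\in I$ let $\iota_i:V_i\to\bigoplus_{j\in I}V_j$ send $v$ to the family whose $i$-th entry is $v$ and all other entries are $0$. Then: (1) $\bigoplus_{i\in I}V_i$ is a near-vector space over $F$ and each $\iota_i$ is $F$-linear; (2) $\bigl(\bigoplus_{i\in I}V_i,\{\iota_i\}_{i\in I}\bigr)$ is a coproduct of the family $\{V_i\}_{i\in I}$ in the category of near-vector spaces over $F$ (with $F$-linear maps as morphisms).
   Context: A scalar group is a tuple $(F,\cdot,1,0,-1)$ where $(F,\cdot,1)$ is a monoid, $0\cdot\alpha=0=\alpha\cdot0$, $\{\pm1\}$ is the solution set of $x^2=1$, and $F\setminus\{0\}$ is a group under $\cdot$. An $F$-space is an abelian group $V$ with a left action of $(F,\cdot)$ by group endomorphisms such that $0,1,-1$ act as $0,\mathrm{id},-\mathrm{id}$. The quasi-kernel is $Q(V)=\{u\in V:\forall\alpha,\beta\in F\ \exists\gamma\in F,\ \alpha u+\beta u=\gamma u\}$. A near-vector space over $F$ is an $F$-space with free action (for $u\ne0$, $\alpha u=\beta u\Rightarrow\alpha=\beta$) such that $Q(V)$ generates $V$ as an additive group. An $F$-linear map is an additive homomorphism $\phi$ with $\phi(\alpha u)=\alpha\phi(u)$ for all $\alpha\in F$. *)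

(* Defs.v *)
From Stdlib Require Import List ClassicalDescription FunctionalExtensionality ProofIrrelevance.
Set Implicit Arguments.

Record scalar_group := ScalarGroup {
  sg_car :> Type;
  sg_mul : sg_car -> sg_car -> sg_car;
  sg_one : sg_car;
  sg_zero : sg_car;
  sg_mone : sg_car;
  sg_mulA : forall a b c, sg_mul a (sg_mul b c) = sg_mul (sg_mul a b) c;
  sg_mul1l : forall a, sg_mul sg_one a = a;
  sg_mul1r : forall a, sg_mul a sg_one = a;
  sg_mul0l : forall a, sg_mul sg_zero a = sg_zero;
  sg_mul0r : forall a, sg_mul a sg_zero = sg_zero;
  sg_sqr1 : forall x, sg_mul x x = sg_one <-> (x = sg_one \/ x = sg_mone);
  sg_one_neq0 : sg_one <> sg_zero;
  sg_mul_neq0 : forall a b, a <> sg_zero -> b <> sg_zero -> sg_mul a b <> sg_zero;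
  sg_inv : forall a, a <> sg_zero ->
    exists b, b <> sg_zero /\ sg_mul a b = sg_one /\ sg_mul b a = sg_one
}.

Record fspace (F : scalar_group) := FSpace {
  fs_car :> Type;
  fs_add : fs_car -> fs_car -> fs_car;
  fs_zero : fs_car;
  fs_opp : fs_car -> fs_car;
  fs_addA : forall u v w, fs_add u (fs_add v w) = fs_add (fs_add u v) w;
  fs_addC : forall u v, fs_add u v = fs_add v u;
  fs_add0 : forall u, fs_add fs_zero u = u;
  fs_addN : forall u, fs_add (fs_opp u) u = fs_zero;
  fs_act : F -> fs_car -> fs_car;
  fs_actD : forall a u v, fs_act a (fs_add u v) = fs_add (fs_act a u) (fs_act a v);
  fs_actM : forall a b u, fs_act (sg_mul F a b) u = fs_act a (fs_act b u);
  fs_act1 : forall u, fs_act (sg_one F) u = u;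
  fs_act0 : forall u, fs_act (sg_zero F) u = fs_zero;
  fs_actN1 : forall u, fs_act (sg_mone F) u = fs_opp u
}.

Section NVS.
Variable F : scalar_group.

Definition quasi_kernel (V : fspace F) (u : V) : Prop :=
  forall a b : F, exists c : F, fs_add V (fs_act V a u) (fs_act V b u) = fs_act V c u.

Inductive add_gen (V : fspace F) (P : V -> Prop) : V -> Prop :=
  | ag_base : forall u, P u -> add_gen V P u
  | ag_zero : add_gen V P (fs_zero V)
  | ag_add : forall u v, add_gen V P u -> add_gen V P v -> add_gen V P (fs_add V u v)
  | ag_opp : forall u, add_gen V P u -> add_gen V P (fs_opp V u).

Definition free_action (V : fspace F) : Prop :=
  forall (u : V) (a b : F), u <> fs_zero V -> fs_act V a u = fs_act V b u -> a = b.

Definition near_vector_space (V : fspace F) : Prop :=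
  free_action V /\ forall v : V, add_gen V (quasi_kernel V) v.

Definition flinear (V W : fspace F) (phi : V -> W) : Prop :=
  (forall u v : V, phi (fs_add V u v) = fs_add W (phi u) (phi v)) /\
  (forall (a : F) (u : V), phi (fs_act V a u) = fs_act W a (phi u)).

Lemma fs_act_zero (V : fspace F) (a : F) : fs_act V a (fs_zero V) = fs_zero V.
Proof.
  rewrite <- (fs_act0 V (fs_zero V)) at 1.
  rewrite <- fs_actM, sg_mul0r. apply fs_act0.
Qed.

Lemma fs_opp_zero (V : fspace F) : fs_opp V (fs_zero V) = fs_zero V.
Proof. rewrite <- fs_actN1. apply fs_act_zero. Qed.

Lemma fs_add_zero (V : fspace F) : fs_add V (fs_zero V) (fs_zero V) = fs_zero V.
Proof. apply fs_add0. Qed.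

Section DirectSum.
Variables (I : Type) (V : I -> fspace F).

Definition finsupp (v : forall i, V i) : Prop :=
  exists s : list I, forall i, ~ In i s -> v i = fs_zero (V i).

Definition ds_car : Type := {v : forall i, V i | finsupp v}.

Lemma ds_eq (x y : ds_car) : (forall i, proj1_sig x i = proj1_sig y i) -> x = y.
Proof.
  destruct x as [x px], y as [y py]; simpl; intro H.
  assert (E : x = y) by (apply functional_extensionality_dep; exact H).
  subst y. f_equal. apply proof_irrelevance.
Qed.

Lemma finsupp_add (x y : forall i, V i) : finsupp x -> finsupp y ->
  finsupp (fun i => fs_add (V i) (x i) (y i)).
Proof.
  intros [s Hs] [t Ht]. exists (s ++ t). intros i Hi.
  rewrite Hs, Ht. apply fs_add_zero.
  - intro H; apply Hi; apply in_or_app; right; exact H.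
  - intro H; apply Hi; apply in_or_app; left; exact H.
Qed.

Lemma finsupp_zero : finsupp (fun i => fs_zero (V i)).
Proof. exists nil. intros; reflexivity. Qed.

Lemma finsupp_opp (x : forall i, V i) : finsupp x -> finsupp (fun i => fs_opp (V i) (x i)).
Proof. intros [s Hs]. exists s. intros i Hi. rewrite Hs by exact Hi. apply fs_opp_zero. Qed.

Lemma finsupp_act (a : F) (x : forall i, V i) : finsupp x ->
  finsupp (fun i => fs_act (V i) a (x i)).
Proof. intros [s Hs]. exists s. intros i Hi. rewrite Hs by exact Hi. apply fs_act_zero. Qed.

Definition ds_add (x y : ds_car) : ds_car :=
  exist _ _ (finsupp_add (proj2_sig x) (proj2_sig y)).
Definition ds_zero : ds_car := exist _ _ finsupp_zero.
Definition ds_opp (x : ds_car) : ds_car := exist _ _ (finsupp_opp (proj2_sig x)).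
Definition ds_act (a : F) (x : ds_car) : ds_car := exist _ _ (finsupp_act a (proj2_sig x)).

Lemma ds_addA : forall u v w, ds_add u (ds_add v w) = ds_add (ds_add u v) w.
Proof. intros; apply ds_eq; intro i; simpl; apply fs_addA. Qed.
Lemma ds_addC : forall u v, ds_add u v = ds_add v u.
Proof. intros; apply ds_eq; intro i; simpl; apply fs_addC. Qed.
Lemma ds_add0 : forall u, ds_add ds_zero u = u.
Proof. intros; apply ds_eq; intro i; simpl; apply fs_add0. Qed.
Lemma ds_addN : forall u, ds_add (ds_opp u) u = ds_zero.
Proof. intros; apply ds_eq; intro i; simpl; apply fs_addN. Qed.
Lemma ds_actD : forall a u v, ds_act a (ds_add u v) = ds_add (ds_act a u) (ds_act a v).
Proof. intros; apply ds_eq; intro i; simpl; apply fs_actD. Qed.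
Lemma ds_actM : forall a b u, ds_act (sg_mul F a b) u = ds_act a (ds_act b u).
Proof. intros; apply ds_eq; intro i; simpl; apply fs_actM. Qed.
Lemma ds_act1 : forall u, ds_act (sg_one F) u = u.
Proof. intros; apply ds_eq; intro i; simpl; apply fs_act1. Qed.
Lemma ds_act0 : forall u, ds_act (sg_zero F) u = ds_zero.
Proof. intros; apply ds_eq; intro i; simpl; apply fs_act0. Qed.
Lemma ds_actN1 : forall u, ds_act (sg_mone F) u = ds_opp u.
Proof. intros; apply ds_eq; intro i; simpl; apply fs_actN1. Qed.

Definition direct_sum : fspace F :=
  @FSpace F ds_car ds_add ds_zero ds_opp ds_addA ds_addC ds_add0 ds_addN
    ds_act ds_actD ds_actM ds_act1 ds_act0 ds_actN1.

Definition inj_fun (i : I) (v : V i) : forall j, V j :=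
  fun j => match excluded_middle_informative (i = j) with
           | left e => eq_rect i V v j e
           | right _ => fs_zero (V j)
           end.

Lemma finsupp_inj (i : I) (v : V i) : finsupp (inj_fun i v).
Proof.
  exists (i :: nil). intros j Hj. unfold inj_fun.
  destruct (excluded_middle_informative (i = j)) as [e|e].
  - exfalso. apply Hj. left. exact e.
  - reflexivity.
Qed.

Definition ds_inj (i : I) (v : V i) : direct_sum := exist _ _ (finsupp_inj i v).

End DirectSum.
End NVS.

(* Main.v *)
Require Import Defs.
From Stdlib Require Import List ClassicalDescription FunctionalExtensionality ProofIrrelevance Classical.
From Stdlib Require ClassicalEpsilon.
Set Implicit Arguments.

Section Aux.
Variable F : scalar_group.

Lemma lin_zero (A B : fspace F) (phi : A -> B) : flinear A B phi ->
  phi (fs_zero A) = fs_zero B.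
Proof.
  intros [_ Hm]. rewrite <- (fs_act0 A (fs_zero A)), Hm. apply fs_act0.
Qed.

Lemma lin_opp (A B : fspace F) (phi : A -> B) : flinear A B phi ->
  forall u, phi (fs_opp A u) = fs_opp B (phi u).
Proof.
  intros [_ Hm] u. rewrite <- fs_actN1, Hm. apply fs_actN1.
Qed.

Lemma lin_gen (A B : fspace F) (phi : A -> B) : flinear A B phi ->
  forall u, add_gen A (quasi_kernel A) u -> add_gen B (quasi_kernel B) (phi u).
Proof.
  intros Hl u H. induction H.
  - apply ag_base. intros a b. destruct (H a b) as [c Hc]. exists c.
    destruct Hl as [Ha Hm]. rewrite <- !Hm, <- Ha, Hc. reflexivity.
  - rewrite (lin_zero Hl). apply ag_zero.
  - destruct Hl as [Ha Hm]. rewrite Ha. apply ag_add; assumption.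
  - rewrite (lin_opp Hl). apply ag_opp; assumption.
Qed.

Lemma add0r (A : fspace F) (u : A) : fs_add A u (fs_zero A) = u.
Proof. rewrite fs_addC. apply fs_add0. Qed.

Variables (I : Type) (V : I -> fspace F).

Definition supp (s : list I) (x : forall i, V i) := forall i, ~ In i s -> x i = fs_zero (V i).

Definition zero_at (j : I) (x : forall i, V i) : forall i, V i :=
  fun k => match excluded_middle_informative (j = k) with
           | left _ => fs_zero (V k)
           | right _ => x k end.

Lemma finsupp_zero_at j (x : forall i, V i) : finsupp V x -> finsupp V (zero_at j x).
Proof.
  intros [s Hs]. exists s. intros i Hi. unfold zero_at.
  destruct (excluded_middle_informative (j = i)); auto.
Qed.

Lemma supp_zero_at j s x : supp (j :: s) x -> supp s (zero_at j x).
Proof.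
  intros Hs i Hi. unfold zero_at.
  destruct (excluded_middle_informative (j = i)) as [e|e]; auto.
  apply Hs. intros [H|H]; auto.
Qed.

Definition dz (j : I) (x : direct_sum V) : direct_sum V :=
  exist _ _ (finsupp_zero_at j (proj2_sig x)).

Lemma decomp (j : I) (x : direct_sum V) :
  x = fs_add (direct_sum V) (ds_inj V j (proj1_sig x j)) (dz j x).
Proof.
  apply ds_eq. intro k. simpl. unfold inj_fun, zero_at.
  destruct (excluded_middle_informative (j = k)) as [e|e].
  - destruct e. simpl. symmetry. apply add0r.
  - symmetry. apply fs_add0.
Qed.

Lemma ds_zero_eq (x : direct_sum V) :
  (forall i, proj1_sig x i = fs_zero (V i)) -> x = fs_zero (direct_sum V).
Proof. intro H. apply ds_eq. exact H. Qed.

Lemma inj_lin i : flinear (V i) (direct_sum V) (ds_inj V i).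
Proof.
  split.
  - intros u v. apply ds_eq. intro k. simpl. unfold inj_fun.
    destruct (excluded_middle_informative (i = k)) as [e|e].
    + destruct e. reflexivity.
    + symmetry. apply fs_add_zero.
  - intros a u. apply ds_eq. intro k. simpl. unfold inj_fun.
    destruct (excluded_middle_informative (i = k)) as [e|e].
    + destruct e. reflexivity.
    + symmetry. apply fs_act_zero.
Qed.

Section Univ.
Variables (W : fspace F) (f : forall i, V i -> W).
Hypothesis Hf : forall i, flinear (V i) W (f i).

Fixpoint G (s : list I) (x : forall i, V i) : W :=
  match s with
  | nil => fs_zero W
  | j :: s' => fs_add W (f j (x j)) (G s' (zero_at j x))
  end.

Lemma G_zero s : G s (fun i => fs_zero (V i)) = fs_zero W.
Proof.
  induction s as [|j s IH]; simpl; auto.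
  assert (E : zero_at j (fun i => fs_zero (V i)) = (fun i => fs_zero (V i))).
  { apply functional_extensionality_dep. intro k. unfold zero_at.
    destruct (excluded_middle_informative (j = k)); auto. }
  rewrite E, IH, (lin_zero (Hf j)). apply fs_add0.
Qed.

Lemma G_add s : forall x y,
  G s (fun i => fs_add (V i) (x i) (y i)) = fs_add W (G s x) (G s y).
Proof.
  induction s as [|j s IH]; intros x y; simpl.
  - symmetry. apply fs_add0.
  - assert (E : zero_at j (fun i => fs_add (V i) (x i) (y i)) =
                (fun i => fs_add (V i) (zero_at j x i) (zero_at j y i))).
    { apply functional_extensionality_dep. intro k. unfold zero_at.
      destruct (excluded_middle_informative (j = k)); auto.
      symmetry. apply fs_add_zero. }
    rewrite E, IH. destruct (Hf j) as [Ha _]. rewrite Ha.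
    set (a := f j (x j)). set (b := f j (y j)).
    set (c := G s (zero_at j x)). set (d := G s (zero_at j y)).
    rewrite !fs_addA. f_equal. rewrite <- !fs_addA. f_equal. apply fs_addC.
Qed.

Lemma G_act s : forall a x,
  G s (fun i => fs_act (V i) a (x i)) = fs_act W a (G s x).
Proof.
  induction s as [|j s IH]; intros a x; simpl.
  - symmetry. apply fs_act_zero.
  - assert (E : zero_at j (fun i => fs_act (V i) a (x i)) =
                (fun i => fs_act (V i) a (zero_at j x i))).
    { apply functional_extensionality_dep. intro k. unfold zero_at.
      destruct (excluded_middle_informative (j = k)); auto.
      symmetry. apply fs_act_zero. }
    rewrite E, IH. destruct (Hf j) as [_ Hm]. rewrite Hm, fs_actD. reflexivity.
Qed.

Lemma G_inj t : forall j v, In j t -> G t (inj_fun V j v) = f j v.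
Proof.
  induction t as [|i t IH]; intros j v Hin; simpl.
  - destruct Hin.
  - assert (E1 : zero_at i (inj_fun V j v) =
             (if excluded_middle_informative (i = j) then (fun k => fs_zero (V k))
              else inj_fun V j v)).
    { destruct (excluded_middle_informative (i = j)) as [e|e];
      apply functional_extensionality_dep; intro k; unfold zero_at, inj_fun;
      destruct (excluded_middle_informative (i = k)) as [e'|e']; auto.
      - destruct (excluded_middle_informative (j = k)) as [e''|e'']; auto.
        exfalso. apply e'. congruence.
      - destruct (excluded_middle_informative (j = k)) as [e''|e'']; auto.
        exfalso. apply e. congruence. }
    rewrite E1. destruct (excluded_middle_informative (i = j)) as [e|e].
    + destruct e. rewrite G_zero. unfold inj_fun.
      destruct (excluded_middle_informative (i = i)) as [e|e]; [|congruence].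
      rewrite (proof_irrelevance _ e eq_refl). simpl. apply add0r.
    + destruct Hin as [H|H]; [congruence|].
      rewrite IH by exact H. unfold inj_fun at 1.
      destruct (excluded_middle_informative (j = i)) as [e'|e']; [congruence|].
      rewrite (lin_zero (Hf i)). apply fs_add0.
Qed.

Lemma G_decomp t j (x : forall i, V i) : In j t ->
  G t x = fs_add W (f j (x j)) (G t (zero_at j x)).
Proof.
  intro Hj.
  assert (E : x = fun k => fs_add (V k) (inj_fun V j (x j) k) (zero_at j x k)).
  { apply functional_extensionality_dep. intro k. unfold inj_fun, zero_at.
    destruct (excluded_middle_informative (j = k)) as [e|e].
    - destruct e. simpl. symmetry. apply add0r.
    - symmetry. apply fs_add0. }
  rewrite E at 1. rewrite G_add, G_inj by exact Hj. reflexivity.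
Qed.

Lemma G_incl s : forall x t, supp s x -> incl s t -> G t x = G s x.
Proof.
  induction s as [|j s IH]; intros x t Hs Hi; simpl.
  - assert (E : x = fun i => fs_zero (V i)).
    { apply functional_extensionality_dep. intro k. apply Hs. simpl; auto. }
    rewrite E. apply G_zero.
  - rewrite (G_decomp t j x (Hi j (or_introl eq_refl))). f_equal.
    apply IH. apply supp_zero_at; exact Hs.
    intros a Ha. apply Hi. right; exact Ha.
Qed.

Lemma G_indep s t x : supp s x -> supp t x -> G s x = G t x.
Proof.
  intros Hs Ht.
  rewrite <- (G_incl Hs (incl_appl t (incl_refl s))).
  apply G_incl. exact Ht. apply incl_appr, incl_refl.
Qed.

Definition pick (x : direct_sum V) : list I :=
  proj1_sig (ClassicalEpsilon.constructive_indefinite_description _ (proj2_sig x)).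

Lemma pick_supp x : supp (pick x) (proj1_sig x).
Proof. unfold pick. destruct (ClassicalEpsilon.constructive_indefinite_description _ _) as [s0 Hs0]. exact Hs0. Qed.

Definition g (x : direct_sum V) : W := G (pick x) (proj1_sig x).

Lemma supp_app_l s t x : supp s x -> supp (s ++ t) x.
Proof. intros H i Hi. apply H. intro; apply Hi, in_or_app; auto. Qed.
Lemma supp_app_r s t x : supp t x -> supp (s ++ t) x.
Proof. intros H i Hi. apply H. intro; apply Hi, in_or_app; auto. Qed.

Lemma g_lin : flinear (direct_sum V) W g.
Proof.
  split.
  - intros x y. unfold g.
    set (s := pick x ++ pick y).
    assert (Sx : supp s (proj1_sig x)) by apply supp_app_l, pick_supp.
    assert (Sy : supp s (proj1_sig y)) by apply supp_app_r, pick_supp.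
    assert (Sxy : supp s (proj1_sig (fs_add (direct_sum V) x y))).
    { intros i Hi. simpl. rewrite Sx, Sy by exact Hi. apply fs_add_zero. }
    rewrite (G_indep (pick_supp _) Sxy), (G_indep (pick_supp x) Sx),
      (G_indep (pick_supp y) Sy). apply G_add.
  - intros a x. unfold g.
    assert (S : supp (pick x) (proj1_sig (fs_act (direct_sum V) a x))).
    { intros i Hi. simpl. rewrite (pick_supp x) by exact Hi. apply fs_act_zero. }
    rewrite (G_indep (pick_supp _) S). apply G_act.
Qed.

Lemma g_inj i v : g (ds_inj V i v) = f i v.
Proof.
  unfold g. assert (S : supp (i :: nil) (proj1_sig (ds_inj V i v))).
  { intros k Hk. simpl. unfold inj_fun.
    destruct (excluded_middle_informative (i = k)) as [e|e]; auto.
    exfalso. apply Hk. left; exact e. }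
  rewrite (G_indep (pick_supp _) S). apply G_inj. left; reflexivity.
Qed.

Lemma g_uniq (h : direct_sum V -> W) : flinear (direct_sum V) W h ->
  (forall i v, h (ds_inj V i v) = f i v) ->
  forall s x, supp s (proj1_sig x) -> h x = G s (proj1_sig x).
Proof.
  intros Hl Hh s. induction s as [|j s IH]; intros x Hs; simpl.
  - rewrite (ds_zero_eq x) by (intro i; apply Hs; simpl; auto).
    apply (lin_zero Hl).
  - rewrite (decomp j x) at 1. destruct Hl as [Ha Hm].
    rewrite Ha, Hh. f_equal. apply IH. simpl. apply supp_zero_at; exact Hs.
Qed.

End Univ.

Lemma ds_gen : (forall i, near_vector_space (V i)) ->
  forall s x, supp s (proj1_sig x) ->
  add_gen (direct_sum V) (quasi_kernel (direct_sum V)) x.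
Proof.
  intros HV s. induction s as [|j s IH]; intros x Hs.
  - rewrite (ds_zero_eq x) by (intro i; apply Hs; simpl; auto). apply ag_zero.
  - rewrite (decomp j x). apply ag_add.
    + apply (lin_gen (inj_lin j)). apply (proj2 (HV j)).
    + apply IH. apply supp_zero_at; exact Hs.
Qed.

End Aux.

Theorem mainTheorem3 (F : scalar_group) (I : Type) (V : I -> fspace F) :
  (forall i, near_vector_space (V i)) ->
  (near_vector_space (direct_sum V) /\
   forall i, flinear (V i) (direct_sum V) (ds_inj V i)) /\
  (forall (W : fspace F) (f : forall i, V i -> W),
     near_vector_space W ->
     (forall i, flinear (V i) W (f i)) ->
     exists g : direct_sum V -> W,
       flinear (direct_sum V) W g /\
       (forall i (v : V i), g (ds_inj V i v) = f i v) /\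
       (forall h : direct_sum V -> W,
          flinear (direct_sum V) W h ->
          (forall i (v : V i), h (ds_inj V i v) = f i v) ->
          forall x, h x = g x)).
Proof.
  intro HV. split; [split|].
  - split.
    + intros x a b Hx Hab.
      destruct (classic (exists i, proj1_sig x i <> fs_zero (V i))) as [[i Hi]|Hn].
      * apply (proj1 (HV i) (proj1_sig x i)); auto.
        change (proj1_sig (fs_act (direct_sum V) a x) i =
                proj1_sig (fs_act (direct_sum V) b x) i). rewrite Hab. reflexivity.
      * exfalso. apply Hx. apply ds_zero_eq. intro i.
        apply NNPP. intro H. apply Hn. exists i. exact H.
    + intro x. apply (ds_gen HV x (pick_supp x)).
  - apply inj_lin.
  - intros W f _ Hf. exists (g W f). split; [apply g_lin; exact Hf|split].
    + apply g_inj; exact Hf.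
    + intros h Hl Hh x. unfold g at 1. apply (g_uniq f Hl Hh). apply pick_supp.
Qed.
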